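(* With the setting in the context, for all $s\in\mathrm{hom}(C,G)_{-1}$ and $v\in\mathrm{hom}(C,G)^1$, $$\sum_{t\in\mathrm{hom}(C,G)^{-1}}\chi_s(t)A_t=\prod_n\prod_{x\in K_n}\sum_{g\in G_{n+1}}\chi_s(gx^* )A_{gx^*},\qquad \sum_{m\in\mathrm{hom}(C,G)_1}\chi_m(v)B_m=\prod_n\prod_{x\in K_n}\sum_{r\in\widehat{G}_{n-1}}\chi_{rx_*}(v)B_{rx_*}.$$
   Context: $(C_\bullet,\partial^C_\bullet)$ is a chain complex with each $C_n$ free abelian on a finite set $K_n$, $K_n\ne\emptyset$ for finitely many $n$; $(G_\bullet,\partial^G_\bullet)$ is a chain complex of finite abelian groups, $\widehat{G}_k=\mathrm{Hom}(G_k,U(1))$. $\mathrm{hom}(C,G)^p=\prod_n\mathrm{Hom}(C_n,G_{n-p})$ with $(\delta^pf)_n=f_{n-1}\partial^C_n-(-1)^p\partial^G_{n-p}f_n$. $\mathrm{hom}(C,G)_p=\mathrm{Hom}(\mathrm{hom}(C,G)^p,U(1))$ (written additively), $\chi_m(f)=m(f)$, $\delta_1m=m\circ\delta^0$. $\mathcal H=\bigotimes_n\bigotimes_{x\in K_n}\mathbb C[G_n]$ with orthonormal basis $|f\rangle$, $f\in\mathrm{hom}(C,G)^0$; $P_t|f\rangle=|f+t\rangle$, $Q_m|f\rangle=\chi_m(f)|f\rangle$; $A_t=P_{\delta^{-1}t}$ ($t\in\mathrm{hom}(C,G)^{-1}$), $B_m=Q_{\delta_1m}$ ($m\in\mathrm{hom}(C,G)_1$).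 For $x\in K_n$, $g\in G_{n-p}$, $gx^*\in\mathrm{hom}(C,G)^p$ has $n$-th component sending $x\mapsto g$ and other elements of $K_n$ to $0$, other components $0$; for $r\in\widehat G_{n-p}$, $rx_*\in\mathrm{hom}(C,G)_p$ is $rx_*(f)=r(f_n(x))$. *)

(* Defs.v *)
From HB Require Import structures.
From mathcomp Require Import all_boot all_order all_algebra all_field.
From mathcomp Require Import classical_sets fsbigop.
From mathcomp Require Import zify.

Set Implicit Arguments.
Unset Strict Implicit.
Unset Printing Implicit Defensive.

Import Order.TTheory GRing.Theory Num.Theory.
Local Open Scope ring_scope.

Section TQFT.

(* The chain complex C: X is the (finite) disjoint union of the bases K_n,
   deg x = n  iff  x \in K_n; bdC x y = coefficient of y in  d^C x. *)
Variable X : finType.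
Variable deg : X -> int.
Variable bdC : X -> X -> int.
Variable G : int -> finZmodType.
Variable dG : forall k : int, {additive G k -> G (k - 1)}.

Definition K (n : int) : {set X} := [set x | deg x == n].

Definition castG (i j : int) (e : i = j) (a : G i) : G j := eq_rect i G a j e.

(* cochain(C,G)^p = prod_n Hom(C_n, G_{n-p}) = prod_n prod_{x in K_n} G_{n-p} *)
Definition cochain (p : int) := {dffun forall x : X, G (deg x - p)}.
HB.instance Definition _ (p : int) := Finite.on (cochain p).

Definition hadd (p : int) (f t : cochain p) : cochain p := [ffun x => f x + t x].

Lemma deg_shift1 (p : int) (x y : X) :
  deg y = deg x - 1 -> deg y - p = deg x - (p + 1).
Proof. move=> ->; lia. Qed.

Lemma deg_shift2 (p : int) (x : X) : deg x - p - 1 = deg x - (p + 1).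
Proof. lia. Qed.

(* (d^C-part of) the coboundary:  f_{n-1} \o d^C_n  evaluated at x *)
Definition bd_term (p : int) (f : cochain p) (x y : X) : G (deg x - (p + 1)) :=
  match deg y =P deg x - 1 with
  | ReflectT e => castG (deg_shift1 p e) (f y *~ bdC x y)
  | ReflectF _ => 0
  end.

Definition delta (p : int) (f : cochain p) : cochain (p + 1) :=
  [ffun x => \sum_(y : X) bd_term f x y
             - castG (deg_shift2 p x) (dG (deg x - p) (f x)) *~ ((-1) ^ p)].

(* cochain(C,G)_p = Hom(cochain(C,G)^p, U(1)), U(1) = unit circle in algC *)
Definition is_char (A : finType) (add : A -> A -> A) (m : {ffun A -> algC}) :=
  (forall a b, m (add a b) = m a * m b) /\ (forall a, `|m a| = 1).

Definition hom_lo (p : int) : set {ffun cochain p -> algC} :=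
  [set m | is_char (@hadd p) m].

Definition dualG (k : int) : set {ffun G k -> algC} :=
  [set r | is_char (fun a b : G k => a + b) r].

(* Operators on H = (x)_n (x)_{x in K_n} C[G_n], with orthonormal basis
   |f>, f in cochain^0, represented by their matrix  op f' f = <f'|O|f>. *)
Local Notation state := (cochain 0).
Definition op := {ffun state -> {ffun state -> algC}}.
HB.instance Definition _ := GRing.Zmodule.on op.

Definition opscale (c : algC) (A : op) : op := [ffun f' => [ffun f => c * A f' f]].

Definition opmul (A B : op) : op :=
  [ffun f => [ffun g => \sum_(h : state) A f h * B h g]].
Definition opone : op := [ffun f => [ffun g => (f == g)%:R]].

Definition Pop (t : state) : op := [ffun f' => [ffun f => (f' == hadd f t)%:R]].
Definition Qop (m : {ffun state -> algC}) : op :=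
  [ffun f' => [ffun f => (f' == f)%:R * m f]].

Definition Aop (t : cochain (-1)) : op := Pop (delta t).
Definition Bop (m : {ffun cochain 1 -> algC}) : op := Qop [ffun f : state => m (delta f)].

Definition upstar (p : int) (x : X) (g : G (deg x - p)) : cochain p :=
  [ffun y => match x =P y with
             | ReflectT e => eq_rect x (fun z => G (deg z - p)) g y e
             | ReflectF _ => 0 end].

Definition lowstar (p : int) (x : X) (r : {ffun G (deg x - p) -> algC})
  : {ffun cochain p -> algC} := [ffun f : cochain p => r (f x)].

Definition degs : seq int := undup [seq deg x | x <- enum X].

End TQFT.

(* Main.v *)
Require Import Defs.
From HB Require Import structures.
From mathcomp Require Import all_boot all_order all_algebra all_field.
From mathcomp Require Import classical_sets fsbigop cardinality.
From mathcomp Require finmap.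
Import GRing.Theory Num.Theory.
Local Open Scope ring_scope.

Set Implicit Arguments.
Unset Strict Implicit.
Unset Printing Implicit Defensive.

Section Ops.
Variables (X : finType) (deg : X -> int) (G : int -> finZmodType).
Local Notation state := (cochain deg G 0).
Local Notation op := (@op X deg G).
Local Notation opmul := (@opmul X deg G).
Local Notation opone := (@opone X deg G).
Local Notation opscale := (@opscale X deg G).

Lemma sum_pick (T : finType) (c : T) (F : T -> algC) :
  \sum_(h : T) (h == c)%:R * F h = F c.
Proof.
rewrite (bigD1 c) //= eqxx mul1r big1 ?addr0 // => h /negbTE ->.
by rewrite mul0r.
Qed.

Lemma sum_pick' (T : finType) (c : T) (F : T -> algC) :
  \sum_(h : T) F h * (h == c)%:R = F c.
Proof. by rewrite -[RHS](sum_pick c); apply: eq_bigr => h _; rewrite mulrC. Qed.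

Lemma opmulDl (A B C : op) : opmul (A + B) C = opmul A C + opmul B C.
Proof.
apply/ffunP => f; rewrite !ffunE; apply/ffunP => g; rewrite !ffunE.
by rewrite -big_split /=; apply: eq_bigr => h _; rewrite !ffunE mulrDl.
Qed.

Lemma opmulDr (A B C : op) : opmul A (B + C) = opmul A B + opmul A C.
Proof.
apply/ffunP => f; rewrite !ffunE; apply/ffunP => g; rewrite !ffunE.
by rewrite -big_split /=; apply: eq_bigr => h _; rewrite !ffunE mulrDr.
Qed.

Lemma opmul0l (C : op) : opmul 0 C = 0.
Proof.
apply/ffunP => f; rewrite !ffunE; apply/ffunP => g; rewrite !ffunE.
by rewrite big1 // => h _; rewrite !ffunE mul0r.
Qed.

Lemma opmul0r (C : op) : opmul C 0 = 0.
Proof.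
apply/ffunP => f; rewrite !ffunE; apply/ffunP => g; rewrite !ffunE.
by rewrite big1 // => h _; rewrite !ffunE mulr0.
Qed.

Lemma opmul_suml (I : finType) (P : pred I) (F : I -> op) (C : op) :
  opmul (\sum_(i | P i) F i) C = \sum_(i | P i) opmul (F i) C.
Proof.
by apply: (big_morph (fun A => opmul A C)) => [A B|]; rewrite ?opmulDl ?opmul0l.
Qed.

Lemma opmul_sumr (I : finType) (P : pred I) (F : I -> op) (C : op) :
  opmul C (\sum_(i | P i) F i) = \sum_(i | P i) opmul C (F i).
Proof.
by apply: (big_morph (fun A => opmul C A)) => [A B|]; rewrite ?opmulDr ?opmul0r.
Qed.

Lemma opscaleM (a b : algC) (A B : op) :
  opmul (opscale a A) (opscale b B) = opscale (a * b) (opmul A B).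
Proof.
apply/ffunP => f; rewrite !ffunE; apply/ffunP => g; rewrite !ffunE.
rewrite mulr_sumr; apply: eq_bigr => h _; rewrite !ffunE.
by rewrite mulrACA.
Qed.

Lemma opscale1 (A : op) : opscale 1 A = A.
Proof.
apply/ffunP => f; rewrite !ffunE; apply/ffunP => g; rewrite !ffunE.
by rewrite mul1r.
Qed.

Lemma haddC (p : int) (f t : cochain deg G p) : hadd f t = hadd t f.
Proof. by apply/ffunP => x; rewrite !ffunE; apply: addrC. Qed.

Lemma haddA (p : int) (f t u : cochain deg G p) :
  hadd f (hadd t u) = hadd (hadd f t) u.
Proof. by apply/ffunP => x; rewrite !ffunE; apply: addrA. Qed.

Definition czero (p : int) : cochain deg G p := [ffun x => 0].

Lemma hadd0 (p : int) (f : cochain deg G p) : hadd f (czero p) = f.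
Proof. by apply/ffunP => x; rewrite !ffunE; apply: addr0. Qed.

Lemma PopM (a b : state) : opmul (Pop a) (Pop b) = Pop (hadd a b).
Proof.
apply/ffunP => f; rewrite !ffunE; apply/ffunP => g; rewrite !ffunE.
under eq_bigr => h _ do rewrite !ffunE.
rewrite sum_pick'. rewrite -haddA (haddC b).
by [].
Qed.

Lemma Pop0 : Pop (czero 0) = opone.
Proof.
apply/ffunP => f; rewrite !ffunE; apply/ffunP => g; rewrite !ffunE.
by rewrite hadd0.
Qed.

Lemma QopM (a b : {ffun state -> algC}) :
  opmul (Qop a) (Qop b) = Qop [ffun f => a f * b f].
Proof.
apply/ffunP => f; rewrite !ffunE; apply/ffunP => g; rewrite !ffunE.
under eq_bigr => h _ do rewrite !ffunE.
rewrite (bigD1 f) //= big1 ?addr0; last first.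
  by move=> h hf; rewrite eq_sym (negbTE hf) !mul0r.
have ee : forall y : state, (y == y) = true by move=> y; apply/eqP.
rewrite ee mul1r; case: eqP => [->|_]; first by rewrite /= mulr1n !mul1r.
by rewrite /= mulr0n !mul0r mulr0.
Qed.

Lemma Qop1 : Qop [ffun _ => 1] = opone.
Proof.
apply/ffunP => f; rewrite !ffunE; apply/ffunP => g; rewrite !ffunE.
by rewrite mulr1.
Qed.

End Ops.
Section Delta.
Variables (X : finType) (deg : X -> int) (bdC : X -> X -> int)
  (G : int -> finZmodType) (dG : forall k : int, {additive G k -> G (k - 1)}).

Lemma addsubACA (V : zmodType) (a b c d : V) : (a + b) - (c + d) = (a - c) + (b - d).
Proof. by rewrite opprD addrACA. Qed.

Lemma selfadd (V : zmodType) (a : V) : a = a + a -> a = 0.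
Proof. by move/(congr1 (fun z => z - a)); rewrite subrr addrK => /esym. Qed.

Lemma castGD (i j : int) (e : i = j) (a b : G i) :
  castG e (a + b) = castG e a + castG e b.
Proof. by case: j / e. Qed.

Lemma deltaD (p : int) (f t : cochain deg G p) :
  delta bdC dG (hadd f t) = hadd (delta bdC dG f) (delta bdC dG t).
Proof.
apply/ffunP => x; rewrite !ffunE.
have -> : \sum_y bd_term bdC (hadd f t) x y =
   \sum_y bd_term bdC f x y + \sum_y bd_term bdC t x y.
  rewrite -big_split /=; apply: eq_bigr => y _; rewrite /bd_term.
  case: eqP => e; last by rewrite addr0.
  by rewrite ffunE mulrzDl castGD.
rewrite (raddfD (dG (deg x - p))) castGD mulrzDl.
apply: addsubACA.
Qed.

Lemma delta0 (p : int) : delta bdC dG (czero deg G p) = czero deg G (p + 1).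
Proof.
have h := deltaD (czero deg G p) (czero deg G p).
rewrite hadd0 in h.
apply/ffunP => x; move/ffunP/(_ x): h => h.
rewrite [RHS]ffunE; apply: selfadd.
by rewrite {1}h /hadd ffunE.
Qed.

End Delta.
Section Upstar.
Variables (X : finType) (deg : X -> int) (G : int -> finZmodType).

Lemma upstar_x (p : int) (x : X) (g : G (deg x - p)) : @upstar X deg G p x g x = g.
Proof.
rewrite ffunE; case: eqP => // e.
by rewrite (eq_irrelevance e (erefl x)).
Qed.

Lemma upstar_y (p : int) (x y : X) (g : G (deg x - p)) :
  x != y -> @upstar X deg G p x g y = 0.
Proof. by move=> ne; rewrite ffunE; case: eqP => // e; rewrite e eqxx in ne. Qed.

Lemma upstarD (p : int) (x : X) (a b : G (deg x - p)) :
  @upstar X deg G p x (a + b) = hadd (@upstar X deg G p x a) (@upstar X deg G p x b).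
Proof.
apply/ffunP => y; rewrite [RHS]ffunE.
case: (eqVneq x y) => [<-|ne]; first by rewrite !upstar_x.
by rewrite !upstar_y // addr0.
Qed.

Lemma char1 (A : finType) (add : A -> A -> A) (m : {ffun A -> algC}) (e : A) :
  is_char add m -> add e e = e -> m e = 1.
Proof.
move=> [mM mN] ee.
have h : m e * m e = m e * 1 by rewrite -mM ee mulr1.
have nz : m e != 0 by apply/eqP => h0; move: (mN e); rewrite h0 normr0 => /eqP; rewrite eq_sym oner_eq0.
exact: (mulfI nz h).
Qed.

Definition restr (p : int) (D : pred X) (f : cochain deg G p) : cochain deg G p :=
  [ffun y => if D y then f y else 0].

Lemma char_decomp (p : int) (m : {ffun cochain deg G p -> algC}) :
  is_char (@hadd X deg G p) m ->
  forall f, m f = \prod_x m (@upstar X deg G p x (f x)).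
Proof.
move=> mc f.
have m0 : m (czero deg G p) = 1 by apply: char1 mc _; apply: hadd0.
suff H : forall r : seq X, uniq r ->
  m (restr (fun y => y \in r) f) = \prod_(x <- r) m (@upstar X deg G p x (f x)).
  rewrite -H ?index_enum_uniq //; congr (m _); apply/ffunP => y.
  by rewrite /restr ffunE mem_index_enum.
elim => [|x r IH] /=.
  move=> _; rewrite big_nil -m0; congr (m _).
move=> /andP[xr ur]; rewrite big_cons -IH // -(proj1 mc); congr (m _).
apply/ffunP => y; rewrite /hadd [RHS]ffunE.
case: (eqVneq x y) => [<-|ne].
  by rewrite upstar_x /restr !ffunE in_cons eqxx (negbTE xr) addr0.
by rewrite upstar_y // /restr !ffunE in_cons eq_sym (negbTE ne) add0r.
Qed.

End Upstar.
Section Abstract.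
Variables (X : finType) (deg : X -> int) (G : int -> finZmodType).
Variables (T : X -> finType) (e : forall x, T x) (ok : forall x, pred (T x)).
Local Notation I := {dffun forall x : X, T x}.
Variable W : I -> @op X deg G.

Definition inF (D : {set X}) (u : I) : bool :=
  [forall x, if x \in D then ok (u x) else u x == e x].

Definition SS (D : {set X}) := \sum_(u | inF D u) W u.

Definition merge (D : {set X}) (u u' : I) : I :=
  [ffun x => if x \in D then u x else u' x].

Hypothesis HW0 : W (finfun e) = opone deg G.
Hypothesis HWm : forall (A B : {set X}) (u u' : I), [disjoint A & B] -> inF A u -> inF B u' ->
  W (merge A u u') = opmul (W u) (W u').

Lemma inFP (D : {set X}) (u : I) : reflect (forall x, if x \in D then ok (u x) else u x == e x) (inF D u).
Proof. exact: forallP. Qed.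

Lemma inF_restr (A B : {set X}) (w : I) :
  inF (A :|: B) w -> inF A (merge A w (finfun e)).
Proof.
move=> /inFP wF; apply/inFP => x; rewrite !ffunE.
case: (boolP (x \in A)) => xA /=; last by rewrite eqxx.
by move: (wF x); rewrite inE xA.
Qed.

Lemma SS0 : SS finset.set0 = opone deg G.
Proof.
rewrite /SS (big_pred1 (finfun e : I)) // => u /=.
apply/inFP/eqP => [h|->].
  by apply/ffunP => x; rewrite ffunE; move: (h x); rewrite inE => /eqP.
by move=> x; rewrite inE ffunE.
Qed.

Lemma SSU (A B : {set X}) : [disjoint A & B] -> SS (A :|: B) = opmul (SS A) (SS B).
Proof.
move=> dAB.
have nAB : forall x, x \in A -> x \in B = false.
  by move=> x xA; apply: disjointFr dAB xA.
rewrite /SS opmul_suml.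
under [RHS]eq_bigr => u _ do rewrite opmul_sumr.
rewrite [RHS]pair_big_dep /=.
pose h (p : I * I) := merge A p.1 p.2.
pose h' (w : I) := (merge A w (finfun e), merge B w (finfun e)).
rewrite (reindex_onto h h'); last first.
  move=> w /inFP wF; apply/ffunP => x; rewrite !ffunE.
  case: (boolP (x \in A)) => xA //=; case: (boolP (x \in B)) => xB //=.
  by move: (wF x); rewrite inE (negbTE xA) (negbTE xB) => /eqP.
suff Hpred : forall u u', (inF (A :|: B) (h (u, u')) && (h' (h (u, u')) == (u, u')))
   = inF A u && inF B u'.
  apply: eq_big => [[u u']|[u u']]; first exact: Hpred.
  by rewrite Hpred => /andP[uF u'F]; rewrite /h /= (HWm dAB uF u'F).
move=> u u'; rewrite /h /h' /=; apply/idP/idP.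
  move=> /andP[wF /eqP [E1 E2]]; apply/andP; split.
    by rewrite -E1; apply: inF_restr wF.
  by rewrite -E2; apply: (@inF_restr B A); rewrite finset.setUC.
move=> /andP[uF u'F]; apply/andP; split.
  apply/inFP => x; rewrite !ffunE inE; case: (boolP (x \in A)) => xA /=.
    by move/inFP: uF => /(_ x); rewrite xA.
  by move/inFP: u'F => /(_ x).
apply/eqP; congr pair; apply/ffunP => x; rewrite !ffunE.
  case: (boolP (x \in A)) => xA //=.
  by move/inFP: uF => /(_ x); rewrite (negbTE xA) => /eqP.
case: (boolP (x \in B)) => xB /=; first by rewrite (disjointFl dAB xB).
by move/inFP: u'F => /(_ x); rewrite (negbTE xB) => /eqP.
Qed.

Lemma SS_big (J : eqType) (r : seq J) (P : pred J) (Aset : J -> {set X}) :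
  uniq r -> {in r &, forall i j, i != j -> [disjoint Aset i & Aset j]} ->
  \big[@opmul X deg G/opone deg G]_(i <- r | P i) SS (Aset i)
    = SS (\bigcup_(i <- r | P i) Aset i).
Proof.
elim: r => [|i r IH] /=.
  by rewrite !big_nil SS0.
move=> /andP[ir ur] dis.
rewrite !big_cons; case: ifP => Pi; last first.
  by apply: IH => // a b ar br; apply: dis; rewrite in_cons ?ar ?br orbT.
rewrite SSU; last first.
  rewrite big_seq_cond; apply: (big_ind (fun S : {set X} => is_true [disjoint Aset i & S])).
  - by rewrite finset.disjoints_subset finset.setC0 finset.subsetT.
  - by move=> S1 S2; rewrite !finset.disjoints_subset finset.setCU finset.subsetI => -> ->.
  move=> j /andP[jr _].
  have ij : i != j by apply: contraNneq ir => ->.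
  by apply: dis => //; rewrite in_cons ?eqxx ?jr ?orbT.
by rewrite IH // => a b ar br; apply: dis; rewrite in_cons ?ar ?br orbT.
Qed.

End Abstract.
Section Abstract2.
Variables (X : finType) (deg : X -> int) (G : int -> finZmodType).
Variables (T : X -> finType) (e : forall x, T x) (ok : forall x, pred (T x)).
Local Notation I := {dffun forall x : X, T x}.
Variable W : I -> @op X deg G.
Hypothesis HW0 : W (finfun e) = opone deg G.
Hypothesis HWm : forall (A B : {set X}) (u u' : I), [disjoint A & B] ->
  inF e ok A u -> inF e ok B u' ->
  W (merge A u u') = opmul (W u) (W u').

Lemma SS_all (F : X -> @op X deg G) :
  (forall x, F x = SS e ok W [set x]) ->
  \big[@opmul X deg G/opone deg G]_(n <- degs deg)
     \big[@opmul X deg G/opone deg G]_(x in K deg n) F x = SS e ok W finset.setT.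
Proof.
move=> HF.
have inner : forall n, \big[@opmul X deg G/opone deg G]_(x in K deg n) F x
                        = SS e ok W (K deg n).
  move=> n; under eq_bigr => x _ do rewrite HF.
  rewrite (SS_big HW0 HWm) ?index_enum_uniq //; last first.
    by move=> a b _ _ ab; rewrite finset.disjoints1 finset.in_set1.
  congr SS; apply/setP => y; apply/bigcupP/idP => [[x xK /set1P -> //]| yK].
  by exists y; rewrite ?finset.set11.
under eq_bigr => n _ do rewrite inner.
rewrite (SS_big HW0 HWm); last first.
- move=> a b _ _ ab; rewrite finset.disjoints_subset; apply/fintype.subsetP => y.
  by rewrite !inE => /eqP ->.
- exact: undup_uniq.
congr SS; apply/setP => y; rewrite finset.in_setT.
have yd : deg y \in degs deg.
  by rewrite /degs mem_undup; apply: map_f; rewrite mem_enum.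
by rewrite (big_rem _ yd) finset.in_setU /K inE eqxx.
Qed.

End Abstract2.
Lemma part1
  (X : finType) (deg : X -> int) (bdC : X -> X -> int)
  (G : int -> finZmodType) (dG : forall k : int, {additive G k -> G (k - 1)})
  (s : {ffun cochain deg G (-1) -> algC}) (Hs : @hom_lo X deg G (-1) s) :
  \sum_(t : cochain deg G (-1)) opscale (s t) (Aop bdC dG t)
    = \big[@opmul X deg G/opone deg G]_(n <- degs deg)
        \big[@opmul X deg G/opone deg G]_(x in K deg n)
          \sum_(g : G (deg x - (-1))) opscale (s (@upstar X deg G (-1) x g)) (Aop bdC dG (@upstar X deg G (-1) x g)).
Proof.
have Hs' : is_char (@hadd X deg G (-1)) s := Hs.
pose T1 : X -> finType := fun x => G (deg x - (-1)).
pose e1 : forall x, T1 x := fun x => 0.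
pose ok1 : forall x, pred (T1 x) := fun x => xpredT.
pose W1 (t : {dffun forall x, T1 x}) := opscale (s t) (Aop bdC dG t).
have s0 : s (czero deg G (-1)) = 1 by apply: char1 Hs' _; apply: hadd0.
have HW0 : W1 (finfun e1) = opone deg G.
  rewrite /W1 -[finfun e1]/(czero deg G (-1)) s0 opscale1 /Aop delta0.
  exact: Pop0.
have HWm : forall (A B : {set X}) (u u' : {dffun forall x, T1 x}),
    [disjoint A & B] -> inF e1 ok1 A u -> inF e1 ok1 B u' ->
    W1 (merge A u u') = opmul (W1 u) (W1 u').
  move=> A B u u' dAB /inFP uF /inFP u'F.
  have -> : merge A u u' = hadd u u'.
    apply/ffunP => y; rewrite !ffunE; case: (boolP (y \in A)) => yA.
      by move: (u'F y); rewrite (disjointFr dAB yA) => /eqP ->; rewrite addr0.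
    by move: (uF y); rewrite (negbTE yA) => /eqP ->; rewrite add0r.
  rewrite /W1 (proj1 Hs') opscaleM /Aop deltaD; congr opscale.
  by rewrite PopM.
rewrite (SS_all HW0 HWm); last first.
  move=> x; rewrite /SS (reindex_onto (fun g : T1 x => @upstar X deg G (-1) x g) (fun u => u x)).
    apply: eq_bigl => g; apply/esym/andP; split; last by rewrite upstar_x.
    apply/inFP => y; rewrite finset.in_set1; case: eqVneq => [->|ne] //.
    by rewrite upstar_y // eq_sym.
  move=> u /inFP uF; apply/ffunP => y; case: (eqVneq x y) => [<-|ne].
    by rewrite upstar_x.
  by rewrite upstar_y //; move: (uF y); rewrite finset.in_set1 eq_sym (negbTE ne) => /eqP.
rewrite /SS; apply: eq_bigl => u; apply/esym/inFP => y.
by rewrite finset.in_setT.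
Qed.
Lemma fsbig_enc (C : finType) (V : choiceType) (M : zmodType) (D : set V)
  (Q : pred C) (dec : C -> V) (F : V -> M) :
  {in Q &, injective dec} -> (forall c, Q c -> dec c \in D) ->
  (forall r, r \in D -> exists2 c, Q c & dec c = r) ->
  \sum_(r \in D) F r = \sum_(c | Q c) F (dec c).
Proof.
move=> inj QD DQ.
have Dfin : finite_set D.
  apply: (@sub_finite_set _ _ (dec @` [set c | Q c])).
    by move=> r /mem_set/DQ [c Qc <-]; exists c.
  by apply: finite_image; exact: finite_finset.
rewrite fsbig_finite //.
transitivity (\sum_(r <- map dec [seq c <- index_enum C | Q c]) F r); last first.
  by rewrite big_map big_filter.
apply: perm_big; apply: uniq_perm.
- exact: finmap.fset_uniq.
- rewrite map_inj_in_uniq ?filter_uniq ?index_enum_uniq // => a b.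
  by rewrite !mem_filter => /andP[Qa _] /andP[Qb _]; exact: inj.
move=> r; rewrite in_fset_set //; apply/idP/mapP => [/DQ [c Qc <-]|[c]].
  by exists c => //; rewrite mem_filter Qc mem_index_enum.
by rewrite mem_filter => /andP[Qc _] ->; exact: QD.
Qed.

Lemma mulrn_card (V : finZmodType) (g : V) : g *+ #|V| = 0.
Proof.
have H : \sum_(h : V) h = \sum_(h : V) (g + h) := reindex_inj (addrI g).
rewrite big_split /= sumr_const in H.
move: (congr1 (fun z => z - \sum_(h : V) h) H); rewrite subrr addrK => /esym.
by [].
Qed.
Section Code.
Variable V : finZmodType.

Lemma NV_gt0 : (0 < #|V|)%N.
Proof. rewrite lt0n; apply/eqP => /card0_eq /(_ 0); done. Qed.

Definition zV : algC := sval (C_prim_root_exists NV_gt0).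
Lemma zV_prim : (#|V|).-primitive_root zV.
Proof. exact: (svalP (C_prim_root_exists NV_gt0)). Qed.

Definition decV (c : {ffun V -> 'I_#|V|}) : {ffun V -> algC} := [ffun g => zV ^+ c g].
Definition e0V : {ffun V -> 'I_#|V|} := [ffun _ => Ordinal NV_gt0].

Lemma decV_inj : injective decV.
Proof.
move=> c c' /ffunP h; apply/ffunP => g; move: (h g); rewrite !ffunE => /eqP.
by rewrite (eq_prim_root_expr zV_prim) !modn_small // => /eqP /ord_inj.
Qed.

Lemma decV_e0 g : decV e0V g = 1.
Proof. by rewrite !ffunE expr0. Qed.

Lemma char_pow (r : {ffun V -> algC}) : is_char (fun a b : V => a + b) r ->
  forall g, r g ^+ #|V| = 1.
Proof.
move=> rc g.
have r0 : r 0 = 1 by apply: char1 rc _; apply: addr0.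
have Hn : forall n, r (g *+ n) = r g ^+ n.
  by elim => [|n IH]; rewrite ?mulr0n ?expr0 // mulrS (proj1 rc) IH exprS.
by rewrite -Hn mulrn_card r0.
Qed.

Lemma decV_surj (r : {ffun V -> algC}) : is_char (fun a b : V => a + b) r ->
  exists c, decV c = r.
Proof.
move=> rc.
have H : forall g, exists i : 'I_#|V|, r g = zV ^+ i.
  by move=> g; have [i hi] := prim_rootP zV_prim (char_pow rc g); exists i.
have [f Hf] := fin_all_exists H.
by exists (finfun f); apply/ffunP => g; rewrite !ffunE Hf.
Qed.

End Code.
Section Part2.
Variables (X : finType) (deg : X -> int) (bdC : X -> X -> int)
  (G : int -> finZmodType) (dG : forall k : int, {additive G k -> G (k - 1)}).

Definition Tc (x : X) : finType := {ffun G (deg x - 1) -> 'I_#|G (deg x - 1)|}.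
Local Notation I2 := {dffun forall x : X, Tc x}.
Definition e2 (x : X) : Tc x := e0V (G (deg x - 1)).
Definition ok2 (x : X) : pred (Tc x) := fun c => decV c \in @dualG G (deg x - 1).

Definition mk2 (u : I2) : {ffun cochain deg G 1 -> algC} :=
  [ffun f : cochain deg G 1 => \prod_x decV (u x) (f x)].

Lemma haddE (p : int) (f t : cochain deg G p) x : hadd f t x = f x + t x.
Proof. by rewrite ffunE. Qed.

Lemma mk2E u f : mk2 u f = \prod_x decV (u x) (f x).
Proof. by rewrite ffunE. Qed.

Lemma mergeE (A : {set X}) (u u' : I2) x : merge A u u' x = if x \in A then u x else u' x.
Proof. by rewrite ffunE. Qed.

Variable v : cochain deg G 1.
Definition W2 (u : I2) := opscale (mk2 u v) (Bop bdC dG (mk2 u)).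

Lemma ok2_char x c : ok2 c -> is_char (fun a b : G (deg x - 1) => a + b) (decV c).
Proof. by move/set_mem. Qed.

Lemma HW0_2 : W2 (finfun e2) = opone deg G.
Proof.
rewrite /W2.
have -> : mk2 (finfun e2) = [ffun _ => 1].
  apply/ffunP => f; rewrite !ffunE; apply: big1 => x _.
  by rewrite ffunE /e2 decV_e0.
rewrite ffunE opscale1 /Bop -Qop1; congr Qop.
by apply/ffunP => f; rewrite !ffunE.
Qed.

Lemma HWm_2 (A B : {set X}) (u u' : I2) : [disjoint A & B] ->
  inF e2 ok2 A u -> inF e2 ok2 B u' ->
  W2 (merge A u u') = opmul (W2 u) (W2 u').
Proof.
move=> dAB /inFP uF /inFP u'F.
have Hmk : forall f, mk2 (merge A u u') f = mk2 u f * mk2 u' f.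
  move=> f; rewrite !mk2E -big_split /=; apply: eq_bigr => x _.
  rewrite mergeE; case: (boolP (x \in A)) => xA.
    move: (u'F x); rewrite (disjointFr dAB xA) => /eqP ->.
    by rewrite /e2 decV_e0 mulr1.
  by move: (uF x); rewrite (negbTE xA) => /eqP ->; rewrite /e2 decV_e0 mul1r.
rewrite /W2 /Bop Hmk opscaleM QopM; congr (opscale _ (Qop _)).
apply/ffunP => f; rewrite ffunE Hmk [RHS]ffunE.
by rewrite (ffunE (fun f1 : cochain deg G 0 => mk2 u (delta bdC dG f1 : cochain deg G 1)))
  (ffunE (fun f1 : cochain deg G 0 => mk2 u' (delta bdC dG f1 : cochain deg G 1))).
Qed.

Lemma summand2 (x : X) :
  \sum_(r \in @dualG G (deg x - 1))
     opscale (@lowstar X deg G 1 x r v) (Bop bdC dG (@lowstar X deg G 1 x r))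
  = SS e2 ok2 W2 [set x].
Proof.
rewrite (@fsbig_enc _ _ _ _ (fun c : Tc x => ok2 c) (@decV (G (deg x - 1)))); last first.
- move=> r rD; have [c Hc] := decV_surj (set_mem rD).
  by exists c => //; rewrite /ok2 Hc.
- by [].
- by move=> a b _ _; apply: decV_inj.
rewrite /SS (reindex_onto (fun c : Tc x => (finfun (dfwith e2 c) : I2)) (fun u => u x)); last first.
  move=> u /inFP uF; apply/ffunP => y; rewrite ffunE.
  case: (eqVneq x y) => [<-|ne]; first by rewrite dfwith_in.
  rewrite dfwith_out //; move: (uF y); rewrite finset.in_set1 eq_sym (negbTE ne).
  by move/eqP ->.
apply: eq_big => [c|c _].
  apply/idP/andP => [okc|[/inFP H _]]; last first.
    by move: (H x); rewrite finset.in_set1 eqxx ffunE dfwith_in.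
  split; last by rewrite ffunE dfwith_in.
  apply/inFP => y; rewrite ffunE finset.in_set1.
  case: (eqVneq y x) => [->|ne]; first by rewrite dfwith_in.
  by rewrite dfwith_out // eq_sym.
have Hlow : mk2 (finfun (dfwith e2 c)) = @lowstar X deg G 1 x (decV c).
  apply/ffunP => f; rewrite mk2E [RHS]ffunE (bigD1 x) //=.
  rewrite ffunE dfwith_in big1 ?mulr1 // => y yx.
  by rewrite ffunE dfwith_out 1?eq_sym // /e2 decV_e0.
by rewrite /W2 Hlow.
Qed.

Lemma lhs2 :
  \sum_(m \in @hom_lo X deg G 1) opscale (m v) (Bop bdC dG m)
  = SS e2 ok2 W2 finset.setT.
Proof.
have okT : forall u, inF e2 ok2 finset.setT u -> forall y, ok2 (u y).
  by move=> u /inFP uF y; move: (uF y); rewrite finset.in_setT.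
rewrite (@fsbig_enc _ _ _ _ (inF e2 ok2 finset.setT) mk2) //.
- move=> u u' /okT uF /okT u'F E; apply/ffunP => x; apply: decV_inj.
  apply/ffunP => g.
  have key : forall w : I2, (forall y, ok2 (w y)) ->
      mk2 w (@upstar X deg G 1 x g) = decV (w x) g.
    move=> w wok; rewrite mk2E (bigD1 x) //= upstar_x big1 ?mulr1 // => y yx.
    rewrite upstar_y 1?eq_sym //.
    by apply: (char1 (ok2_char (wok y))); apply: addr0.
  by rewrite -!key ?E.
- move=> u /okT uF; apply/mem_set; split.
    move=> f t; rewrite !mk2E -big_split /=; apply: eq_bigr => x _.
    by rewrite haddE; apply: (proj1 (ok2_char (uF x))).
  move=> f; rewrite mk2E normr_prod; apply: big1 => x _.
  exact: (proj2 (ok2_char (uF x))).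
move=> m /set_mem mc.
have hx : forall x g, [ffun g => m (@upstar X deg G 1 x g)] g = m (@upstar X deg G 1 x g).
  by move=> x g; rewrite ffunE.
have Hr : forall x, is_char (fun a b : G (deg x - 1) => a + b)
                      [ffun g => m (@upstar X deg G 1 x g)].
  move=> x; split => [a b|a]; rewrite !hx; last exact: (proj2 mc).
  by rewrite upstarD (proj1 mc).
have H : forall x, exists c : Tc x, decV c = [ffun g => m (@upstar X deg G 1 x g)].
  by move=> x; apply: decV_surj.
have [u Hu] := fin_all_exists H.
exists (finfun u).
  apply/inFP => x; rewrite finset.in_setT /ok2 (ffunE u) Hu; apply/mem_set; exact: Hr.
apply/ffunP => f; rewrite mk2E (char_decomp mc f); apply: eq_bigr => x _.
by rewrite (ffunE u) Hu hx.
Qed.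

End Part2.

Unset Implicit Arguments.

Theorem proposition12
  (X : finType) (deg : X -> int) (bdC : X -> X -> int)
  (G : int -> finZmodType) (dG : forall k : int, {additive G k -> G (k - 1)})
  (HbdC : forall x y : X, bdC x y != 0 -> deg y = deg x - 1)
  (HCC : forall x z : X, \sum_(y : X) bdC x y * bdC y z = 0)
  (HGG : forall (k : int) (a : G k), dG (k - 1) (dG k a) = 0)
  (s : {ffun cochain deg G (-1) -> algC}) (Hs : @hom_lo X deg G (-1) s)
  (v : cochain deg G 1) :
  \sum_(t : cochain deg G (-1)) opscale (s t) (Aop bdC dG t)
    = \big[@opmul X deg G/opone deg G]_(n <- degs deg)
        \big[@opmul X deg G/opone deg G]_(x in K deg n)
          \sum_(g : G (deg x - (-1))) opscale (s (@upstar X deg G (-1) x g)) (Aop bdC dG (@upstar X deg G (-1) x g))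
  /\
  \sum_(m \in @hom_lo X deg G 1) opscale (m v) (Bop bdC dG m)
    = \big[@opmul X deg G/opone deg G]_(n <- degs deg)
        \big[@opmul X deg G/opone deg G]_(x in K deg n)
          \sum_(r \in @dualG G (deg x - 1))
            opscale (@lowstar X deg G 1 x r v) (Bop bdC dG (@lowstar X deg G 1 x r)).
Proof.
split; first exact: part1.
rewrite lhs2; symmetry.
apply: (SS_all (HW0_2 bdC dG v) (HWm_2 bdC dG v)) => x.
exact: summand2.
Qed.
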